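(* Let $((\mathfrak g,E),(\mathfrak h,F);\rho,\mu)$ be a matched pair of ENL algebras. Then $(\mathfrak g_E,\mathfrak h_F;\rho_{(E,F)},\mu_{(E,F)})$ is a matched pair of Lie algebras, where $\rho_{(E,F)}(x)\xi=\rho(Ex)\xi$ and $\mu_{(E,F)}(\xi)x=\mu(F\xi)x$ for $x\in\mathfrak g,\xi\in\mathfrak h$. Moreover, there is a canonical Lie algebra isomorphism $\mathfrak g_E\bowtie\mathfrak h_F\cong(\mathfrak g\bowtie\mathfrak h)_{E\oplus F}$.
   Context: All vector spaces are finite-dimensional over an algebraically closed field of characteristic zero. An ENL algebra $(\mathfrak g,[\cdot,\cdot]_{\mathfrak g},E)$ is a Lie algebra with a linear map $E$ such that $E[x,y]_{\mathfrak g}=[x,Ey]_{\mathfrak g}$ for all $x,y$ (equivalently $E[x,y]_{\mathfrak g}=[Ex,y]_{\mathfrak g}$); its deformed Lie algebra $\mathfrak g_E$ is $\mathfrak g$ with bracket $[x,y]_E:=[Ex,y]_{\mathfrak g}$. A matched pair of Lie algebras $(\mathfrak g,\mathfrak h;\rho,\mu)$: Lie algebras $\mathfrak g,\mathfrak h$ with representations $\rho:\mathfrak g\to\mathfrak{gl}(\mathfrak h)$, $\mu:\mathfrak h\to\mathfrak{gl}(\mathfrak g)$ such that $\rho(x)[\xi,\eta]_{\mathfrak h}=[\rho(x)\xi,\eta]_{\mathfrak h}+[\xi,\rho(x)\eta]_{\mathfrak h}+\rho(\mu(\eta)x)\xi-\rho(\mu(\xi)x)\eta$ and $\mu(\xi)[x,y]_{\mathfrak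 g}=[\mu(\xi)x,y]_{\mathfrak g}+[x,\mu(\xi)y]_{\mathfrak g}+\mu(\rho(y)\xi)x-\mu(\rho(x)\xi)y$. Its bicrossed product $\mathfrak g\bowtie\mathfrak h$ is $\mathfrak g\oplus\mathfrak h$ with the Lie bracket $[x+\xi,y+\eta]_{\bowtie}=([x,y]_{\mathfrak g}+\mu(\xi)y-\mu(\eta)x)+([\xi,\eta]_{\mathfrak h}+\rho(x)\eta-\rho(y)\xi)$. For ENL algebras $(\mathfrak g,E),(\mathfrak h,F)$, a matched pair of ENL algebras $((\mathfrak g,E),(\mathfrak h,F);\rho,\mu)$ is a matched pair of Lie algebras with $F(\rho(x)\xi)=\rho(Ex)\xi=\rho(x)(F\xi)$ and $E(\mu(\xi)x)=\mu(F\xi)x=\mu(\xi)(Ex)$ for all $x,\xi$. In that case $E\oplus F:x+\xi\mapsto Ex+F\xi$ makes $\mathfrak g\bowtie\mathfrak h$ an ENL algebra, and $(\mathfrak g\bowtie\mathfrak h)_{E\oplus F}$ denotes $\mathfrak g\oplus\mathfrak h$ with bracket $[u,v]_{E\oplus F}=[(E\oplus F)u,v]_{\bowtie}$. *)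

(* Defs.v *)
From HB Require Import structures.
From mathcomp Require Import all_boot all_order all_algebra.
Set Implicit Arguments. Unset Strict Implicit. Unset Printing Implicit Defensive.
Import GRing.Theory.
Local Open Scope ring_scope.

Section LieDefs.
Variable K : fieldType.

Definition lin_map (U V : lmodType K) (f : U -> V) : Prop :=
  forall (a : K) x y, f (a *: x + y) = a *: f x + f y.

Definition bilinear (U V W : lmodType K) (f : U -> V -> W) : Prop :=
  (forall (a : K) x y z, f (a *: x + y) z = a *: f x z + f y z) /\
  (forall (a : K) x y z, f x (a *: y + z) = a *: f x y + f x z).

Definition is_lie (V : lmodType K) (br : V -> V -> V) : Prop :=
  bilinear br /\ (forall x, br x x = 0) /\
  (forall x y z, br x (br y z) + br y (br z x) + br z (br x y) = 0).

Definition is_rep (G H : lmodType K) (brg : G -> G -> G) (rho : G -> H -> H) : Prop :=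
  bilinear rho /\
  (forall x y v, rho (brg x y) v = rho x (rho y v) - rho y (rho x v)).

Definition is_ENL (V : lmodType K) (br : V -> V -> V) (E : V -> V) : Prop :=
  is_lie br /\ lin_map E /\ (forall x y, E (br x y) = br x (E y)).

Definition deformed (V : lmodType K) (br : V -> V -> V) (E : V -> V) : V -> V -> V :=
  fun x y => br (E x) y.

Definition is_matched_pair (G H : lmodType K) (brg : G -> G -> G) (brh : H -> H -> H)
    (rho : G -> H -> H) (mu : H -> G -> G) : Prop :=
  [/\ is_lie brg, is_lie brh, is_rep brg rho, is_rep brh mu &
    ((forall x xi eta, rho x (brh xi eta) =
       brh (rho x xi) eta + brh xi (rho x eta) + rho (mu eta x) xi - rho (mu xi x) eta) /\
    (forall xi x y, mu xi (brg x y) =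
       brg (mu xi x) y + brg x (mu xi y) + mu (rho y xi) x - mu (rho x xi) y))].

Definition is_ENL_matched_pair (G H : lmodType K) (brg : G -> G -> G) (E : G -> G)
    (brh : H -> H -> H) (F : H -> H) (rho : G -> H -> H) (mu : H -> G -> G) : Prop :=
  [/\ is_ENL brg E, is_ENL brh F, is_matched_pair brg brh rho mu,
    (forall x xi, F (rho x xi) = rho (E x) xi /\ rho (E x) xi = rho x (F xi)) &
    (forall x xi, E (mu xi x) = mu (F xi) x /\ mu (F xi) x = mu xi (E x))].

Definition bowtie (G H : lmodType K) (brg : G -> G -> G) (brh : H -> H -> H)
    (rho : G -> H -> H) (mu : H -> G -> G) : (G * H)%type -> (G * H)%type -> (G * H)%type :=
  fun u v => (brg u.1 v.1 + mu u.2 v.1 - mu v.2 u.1,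
              brh u.2 v.2 + rho u.1 v.2 - rho v.1 u.2).

Definition dsum (G H : lmodType K) (E : G -> G) (F : H -> H) : (G * H)%type -> (G * H)%type :=
  fun u => (E u.1, F u.2).

Definition is_lie_iso (V W : lmodType K) (br1 : V -> V -> V) (br2 : W -> W -> W)
    (phi : V -> W) : Prop :=
  [/\ is_lie br1, is_lie br2, lin_map phi, bijective phi &
      forall x y, phi (br1 x y) = br2 (phi x) (phi y)].

End LieDefs.

(* Main.v *)
Require Import Defs.
From HB Require Import structures.
From mathcomp Require Import all_boot all_order all_algebra.
From mathcomp Require Import vector ring.
From Stdlib Require Import FunctionalExtensionality.
Import GRing.Theory VectorInternalTheory.
Local Open Scope ring_scope.
Set Implicit Arguments. Unset Strict Implicit.

Section Bil.
Variable K : fieldType.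
Variables (V W U : lmodType K) (f : V -> W -> U).
Hypothesis hf : Defs.bilinear f.
Let h1 : forall (a : K) x y z, f (a *: x + y) z = a *: f x z + f y z.
Proof. exact: (proj1 hf). Qed.
Let h2 : forall (a : K) x y z, f x (a *: y + z) = a *: f x y + f x z.
Proof. exact: (proj2 hf). Qed.
Lemma bDl x y z : f (x + y) z = f x z + f y z.
Proof. by rewrite -{1}(scale1r x) h1 scale1r. Qed.
Lemma b0l z : f 0 z = 0.
Proof. by apply: (addrI (f 0 z)); rewrite -bDl !addr0. Qed.
Lemma bNl x z : f (- x) z = - f x z.
Proof. by apply/eqP; rewrite -addr_eq0 -bDl addNr b0l. Qed.
Lemma bZl a x z : f (a *: x) z = a *: f x z.
Proof. by rewrite -(addr0 (a *: x)) h1 b0l addr0. Qed.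
Lemma bDr x y z : f z (x + y) = f z x + f z y.
Proof. by rewrite -{1}(scale1r x) h2 scale1r. Qed.
Lemma b0r z : f z 0 = 0.
Proof. by apply: (addrI (f z 0)); rewrite -bDr !addr0. Qed.
Lemma bNr x z : f z (- x) = - f z x.
Proof. by apply/eqP; rewrite -addr_eq0 -bDr addNr b0r. Qed.
Lemma bZr a x z : f z (a *: x) = a *: f z x.
Proof. by rewrite -(addr0 (a *: x)) h2 b0r addr0. Qed.
End Bil.

Section Lin.
Variable K : fieldType.
Variables (V W : lmodType K) (f : V -> W).
Hypothesis hf : lin_map f.
Lemma lD x y : f (x + y) = f x + f y.
Proof. by rewrite -{1}(scale1r x) hf scale1r. Qed.
Lemma l0 : f 0 = 0.
Proof. by apply: (addrI (f 0)); rewrite -lD !addr0. Qed.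
Lemma lN x : f (- x) = - f x.
Proof. by apply/eqP; rewrite -addr_eq0 -lD addNr l0. Qed.
Lemma lZ a x : f (a *: x) = a *: f x.
Proof. by rewrite -(addr0 (a *: x)) hf l0 addr0. Qed.
End Lin.

Ltac vclose := apply: v2r_inj; rewrite ?(linearD, linearN, linearZ, linear0);
  apply/rowP => j; rewrite ?mxE; ring.

Lemma pairD (K : fieldType) (G H : lmodType K) (a c : G) (b d : H) :
  (a, b) + (c, d) = (a + c, b + d). Proof. by []. Qed.
Lemma pairN (K : fieldType) (G H : lmodType K) (a : G) (b : H) :
  - (a, b) = (- a, - b). Proof. by []. Qed.
Lemma pairZ (K : fieldType) (G H : lmodType K) k (a : G) (b : H) :
  k *: (a, b) = (k *: a, k *: b). Proof. by []. Qed.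
Lemma pair0 (K : fieldType) (G H : lmodType K) : (0 : G * H) = (0, 0). Proof. by []. Qed.
Lemma lie_anti (K : fieldType) (V : lmodType K) (br : V -> V -> V) :
  is_lie br -> forall a b, br a b = - br b a.
Proof.
case=> hb [ha _] a b; apply/eqP; rewrite -addr_eq0.
have := ha (a + b); rewrite (bDl hb) !(bDr hb) !ha add0r addr0 => ->.
by [].
Qed.

Lemma lie_jac (K : fieldType) (V : lmodType K) (br : V -> V -> V) :
  is_lie br -> forall a b c, br a (br b c) = - br b (br c a) - br c (br a b).
Proof.
case=> hb [_ hj] a b c; apply/eqP; rewrite -opprD -addr_eq0 addrA; exact/eqP/hj.
Qed.

Section MP.
Variable K : fieldType.
Variables (G H : vectType K) (brg : G -> G -> G) (brh : H -> H -> H)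
  (rho : G -> H -> H) (mu : H -> G -> G).
Hypothesis hyp : is_matched_pair brg brh rho mu.

Lemma bowtie_lie : is_lie (bowtie brg brh rho mu).
Proof.
have [lg lh [br rr] [bm rm] [c1 c2]] := hyp.
have [bg _] := lg; have [bh _] := lh.
have ag := lie_anti lg; have ah := lie_anti lh.
have jg := lie_jac lg; have jh := lie_jac lh.
Ltac expand bg bh br bm := rewrite ?(bDl bg, bNl bg, bZl bg, b0l bg, bDr bg, bNr bg, bZr bg, b0r bg,
   bDl bh, bNl bh, bZl bh, b0l bh, bDr bh, bNr bh, bZr bh, b0r bh,
   bDl br, bNl br, bZl br, b0l br, bDr br, bNr br, bZr br, b0r br,
   bDl bm, bNl bm, bZl bm, b0l bm, bDr bm, bNr bm, bZr bm, b0r bm).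
split; [|split].
- split=> a [x xi] [y eta] [z zeta]; rewrite /bowtie ?pairZ ?pairD /= ?pairZ ?pairD;
  congr pair; expand bg bh br bm; vclose.
- move=> [x xi]; rewrite /bowtie /= lg.2.1 lh.2.1 add0r subrr add0r subrr; by [].
- move=> [x xi] [y eta] [z zeta]; rewrite /bowtie /= !pairD /=; congr pair.
  + expand bg bh br bm.
    rewrite (jg x y z) !rm !c2.
    rewrite (ag z (mu xi y)) (ag x (mu eta z)) (ag y (mu zeta x)).
    vclose.
  + expand bg bh br bm.
    rewrite (jh xi eta zeta) !rr !c1.
    rewrite (ah zeta (rho x eta)) (ah xi (rho y zeta)) (ah eta (rho z xi)).
    vclose.
Qed.
End MP.
Lemma enl_swap (K : fieldType) (V : lmodType K) (br : V -> V -> V) E :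
  is_ENL br E -> forall x y, br (E x) y = br x (E y).
Proof.
case=> l [lE hE] x y.
by rewrite (lie_anti l) -hE (lie_anti l y x) (lN lE) opprK hE.
Qed.

Lemma deformed_lie (K : fieldType) (V : lmodType K) (br : V -> V -> V) E :
  is_ENL br E -> is_lie (deformed br E).
Proof.
move=> h; have sw := enl_swap h; case: h => l [lE hE].
have [bb [ba bj]] := l.
rewrite /deformed; split; [|split].
- split=> a x y z.
  + by rewrite (lD lE) (lZ lE) (bDl bb) (bZl bb).
  + by rewrite (bDr bb) (bZr bb).
- by move=> x; rewrite sw -hE ba (l0 lE).
- move=> a b c.
  have -> : br (E c) a = br c (E a) by exact: sw.
  have -> : br (E c) (br (E a) b) = br c (br (E a) (E b)) by rewrite sw hE.
  exact: bj.
Qed.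

Theorem theorem2p5 (K : closedFieldType) (charK0 : [pchar K] =i pred0)
    (G H : vectType K) (brg : G -> G -> G) (E : G -> G)
    (brh : H -> H -> H) (F : H -> H) (rho : G -> H -> H) (mu : H -> G -> G) :
  is_ENL_matched_pair brg E brh F rho mu ->
  let rhoEF := fun x xi => rho (E x) xi in
  let muEF := fun xi x => mu (F xi) x in
  is_matched_pair (deformed brg E) (deformed brh F) rhoEF muEF /\
  is_lie_iso (bowtie (deformed brg E) (deformed brh F) rhoEF muEF)
             (deformed (bowtie brg brh rho mu) (dsum E F)) id.
Proof.
move=> [eg eh mp cr cm] rhoEF muEF.
have [lg [lE hE]] := eg; have [lh [lF hF]] := eh.
have [_ _ [br rr] [bm rm] [c1 c2]] := mp.
have swg := enl_swap eg; have swh := enl_swap eh.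
have crF x xi : F (rho x xi) = rho x (F xi) by rewrite (cr x xi).1 (cr x xi).2.
have cmE x xi : E (mu xi x) = mu xi (E x) by rewrite (cm x xi).1 (cm x xi).2.
have mpd : is_matched_pair (deformed brg E) (deformed brh F) rhoEF muEF.
  split; first exact: deformed_lie; first exact: deformed_lie.
  - split; first split.
    + by move=> a x y z; rewrite /rhoEF (lD lE) (lZ lE) (bDl br) (bZl br).
    + by move=> a x y z; rewrite /rhoEF (bDr br) (bZr br).
    + by move=> x y v; rewrite /rhoEF /deformed hE rr.
  - split; first split.
    + by move=> a x y z; rewrite /muEF (lD lF) (lZ lF) (bDl bm) (bZl bm).
    + by move=> a x y z; rewrite /muEF (bDr bm) (bZr bm).
    + by move=> x y v; rewrite /muEF /deformed hF rm.
  - split.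
    + move=> x xi eta; rewrite /rhoEF /muEF /deformed c1 crF.
      by rewrite -(cm x eta).2 (cr _ xi).2 cmE.
    + move=> xi x y; rewrite /rhoEF /muEF /deformed c2 cmE.
      by rewrite -(cr y xi).2 (cm x (rho (E y) xi)).2 crF.
split=> //.
have eqb u v : bowtie (deformed brg E) (deformed brh F) rhoEF muEF u v =
               deformed (bowtie brg brh rho mu) (dsum E F) u v.
  case: u v => [x xi] [y eta]; rewrite /bowtie /deformed /dsum /rhoEF /muEF /=.
  by rewrite (cm x eta).2 (cr y xi).2.
have e : bowtie (deformed brg E) (deformed brh F) rhoEF muEF =
         deformed (bowtie brg brh rho mu) (dsum E F).
  by apply: functional_extensionality => u; apply: functional_extensionality => v.
split.
- exact: bowtie_lie.
- rewrite -e; exact: bowtie_lie.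
- by move=> a x y.
- by exists id.
- by move=> x y; rewrite eqb.
Qed.
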